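(* Let $D^*:\mathcal{A}\to\mathcal{A}$ be defined by $D^*v=\mathrm{Res}_w\, w^{-2}(\mathrm{Id}\otimes c)Y(w)v$ (the coefficient of $w^1$ in $(\mathrm{Id}\otimes c)Y(w)v\in\mathcal{A}[w]$). Then $D^*$ is a derivation of $\mathcal{A}$ with $D^*(t_{a,b})=b\,t_{a,b-1}$ for all $a,b\ge0$ (in particular $D^*(t_{0,n})=n\,t_{0,n-1}$, $D^*(t_{2,0})=0$), and the identity $$\frac{d}{dw}Y(w)=Y(w)D^*-(\mathrm{Id}\otimes D^* )Y(w)$$ holds as maps $\mathcal{A}\to(\mathcal{A}\otimes\mathcal{A})(\!(w^{-1})\!)$.
   Context: Fix $\epsilon_1+\epsilon_2+\epsilon_3=0$, $\sigma_2=\epsilon_1^2+\epsilon_1\epsilon_2+\epsilon_2^2$, $\sigma_3=\epsilon_1\epsilon_2\epsilon_3$. $\mathcal{A}=U_{\epsilon_1}(\mathfrak{gl}_1\otimes\mathrm{Diff}_{\epsilon_2}(\mathbb{C}))$ is the associative algebra with elements $t_{m,n}$ ($m,n\ge0$) satisfying $[t_{0,0},t_{c,d}]=0$, $[t_{1,0},t_{c,d}]=d\,t_{c,d-1}$, $[t_{0,1},t_{c,d}]=-c\,t_{c-1,d}$, $[t_{2,0},t_{c,d}]=2d\,t_{c+1,d-1}$, $[t_{1,1},t_{c,d}]=(d-c)t_{c,d}$, $[t_{0,2},t_{c,d}]=-2c\,t_{c-1,d+1}$, and $[t_{3,0},t_{c,d}]=3d\,t_{c+2,d-1}+\sigma_2\frac{d(d-1)(d-2)}{4}t_{c,d-3}+\frac{3}{2}\sigma_3\sum_{m=0}^{d-3}\sum_{n=0}^{c}\frac{\binom{m+n+1}{n+1}(n+1)\binom{d-m+c-n-2}{c-n+1}(c-n+1)}{\binom{d+c}{c}}t_{n,m}t_{c-n,d-3-m}$;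 it is generated by $t_{2,0}$ and $t_{0,n}$, $n\ge0$. $Y(w)=\Delta_{\mathcal{A}}:\mathcal{A}\to(\mathcal{A}\otimes\mathcal{A})(\!(w^{-1})\!)$ is the algebra homomorphism with $Y(w)t_{0,n}=1\otimes t_{0,n}+\sum_{m=0}^n\binom{n}{m}w^{n-m}t_{0,m}\otimes1$ and $Y(w)t_{2,0}=1\otimes t_{2,0}+t_{2,0}\otimes1+2\sigma_3\sum_{m,n\ge0}\frac{(m+n+1)!}{m!n!}(-1)^nw^{-n-m-2}t_{0,n}\otimes t_{0,m}$. $c:\mathcal{A}\to\mathbb{C}$ is the augmentation algebra homomorphism with $c(1)=1$, $c(t_{a,b})=0$. *)

(* Defs.v *)
From HB Require Import structures.
From mathcomp Require Import all_boot all_order all_algebra.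
From mathcomp Require Export reals complex.
Set Implicit Arguments. Unset Strict Implicit. Unset Printing Implicit Defensive.
Import Order.TTheory GRing.Theory Num.Theory.
Local Open Scope ring_scope.

Definition islin (C : pzRingType) (U V : lmodType C) (f : U -> V) : Prop :=
  forall (a : C) (u v : U), f (a *: u + v) = a *: f u + f v.

Definition isbilin (C : pzRingType) (U W V : lmodType C) (f : U -> W -> V) : Prop :=
  (forall u, islin (f u)) /\ (forall w, islin (fun u => f u w)).

(* [tens : A -> A -> T] exhibits T as the tensor product A (x)_C A
   (universal property for bilinear maps: existence and uniqueness). *)
Definition is_tensor (C : pzRingType) (A T : lmodType C) (tens : A -> A -> T) : Prop :=
  [/\ isbilin tens,
      (forall (V : lmodType C) (f : A -> A -> V), isbilin f ->
         exists g : T -> V, islin g /\ forall a b, g (tens a b) = f a b) &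
      (forall (V : lmodType C) (g1 g2 : T -> V), islin g1 -> islin g2 ->
         (forall a b, g1 (tens a b) = g2 (tens a b)) -> forall x, g1 x = g2 x)].

Definition comm (R : pzRingType) (x y : R) : R := x * y - y * x.

Inductive gen_by (C : pzRingType) (A : algType C) (t : nat -> nat -> A) : A -> Prop :=
| gen_t20 : gen_by t (t 2%N 0%N)
| gen_t0n n : gen_by t (t 0%N n)
| gen_one : gen_by t 1
| gen_scale (a : C) x : gen_by t x -> gen_by t (a *: x)
| gen_add x y : gen_by t x -> gen_by t y -> gen_by t (x + y)
| gen_mul x y : gen_by t x -> gen_by t y -> gen_by t (x * y).

(* The defining commutation relations of U_{eps1}(gl_1 (x) Diff_{eps2}(C)),
   with s2 = sigma_2, s3 = sigma_3. *)
Definition UDiff_rels (C : fieldType) (A : algType C) (s2 s3 : C)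
  (t : nat -> nat -> A) : Prop :=
  forall c d : nat,
  [/\ comm (t 0 0)%N (t c d) = 0,
      comm (t 1 0)%N (t c d) = d%:R *: t c d.-1,
      comm (t 0 1)%N (t c d) = - (c%:R *: t c.-1 d) &
      comm (t 2 0)%N (t c d) = (2 * d)%:R *: t c.+1 d.-1] /\
  [/\ comm (t 1 1)%N (t c d) = (d%:R - c%:R) *: t c d,
      comm (t 0 2)%N (t c d) = - ((2 * c)%:R *: t c.-1 d.+1) &
      comm (t 3 0)%N (t c d) =
        (3 * d)%:R *: t c.+2 d.-1
        + (s2 * (d * (d - 1) * (d - 2))%:R / 4%:R) *: t c (d - 3)%N
        + (3%:R / 2%:R * s3) *:
            \sum_(m < d - 2) \sum_(n < c.+1)
              (('C(m + n + 1, n + 1) * (n + 1) * 'C(d - m + c - n - 2, c - n + 1)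
                 * (c - n + 1))%:R / ('C(d + c, c))%:R)
              *: (t n m * t (c - n)%N (d - 3 - m)%N)].

(* Laurent series in w^{-1} with coefficients in T are coefficient functions
   f : int -> T (f k = coefficient of w^k) that vanish above some bound. *)
Definition lbounded (T : zmodType) (f : int -> T) (N : int) : Prop :=
  forall k : int, N < k -> f k = 0.

(* Coefficient of w^k in the product f g, given upper bounds N for f and M for g:
   sum over i + j = k with i <= N, j <= M. *)
Definition lmulB (T : pzRingType) (f g : int -> T) (N M k : int) : T :=
  let n := N + M - k in
  if 0 <= n then \sum_(a < (absz n).+1) f (N - (a : nat)%:Z) * g (M - (absz n - a)%:Z)
  else 0.

Definition laurent_alg_hom (C : pzRingType) (A : algType C) (T : algType C)
  (Y : A -> int -> T) : Prop :=
  [/\ forall x, exists N, lbounded (Y x) N,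
      forall (a : C) x y k, Y (a *: x + y) k = a *: Y x k + Y y k,
      forall k, Y 1 k = (if k == 0 then 1 else 0) &
      forall x y N M, lbounded (Y x) N -> lbounded (Y y) M ->
        forall k, Y (x * y) k = lmulB (Y x) (Y y) N M k].

Definition Dstar (C : pzRingType) (A : algType C) (T : algType C)
  (idc : T -> A) (Y : A -> int -> T) (v : A) : A := idc (Y v 1).

(* Main.v *)
Require Import Defs.
From HB Require Import structures.
From mathcomp Require Import all_boot all_order all_algebra.
From mathcomp Require Import reals complex.
From mathcomp Require Import ring lra zify.
Import Order.TTheory GRing.Theory Num.Theory.
Local Open Scope ring_scope.

Set Implicit Arguments. Unset Strict Implicit. Unset Printing Implicit Defensive.

Definition lmulN (T : pzRingType) (f g : int -> T) (N M k : int) : T :=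
  match N + M - k with
  | Posz n => \sum_(a < n.+1) f (N - (a : nat)%:Z) * g (M - (n - a)%:Z)
  | Negz _ => 0 end.

Lemma lmulBE (T : pzRingType) (f g : int -> T) N M k :
  lmulB f g N M k = lmulN f g N M k.
Proof. by rewrite /lmulB /lmulN; case: (N + M - k). Qed.

Lemma negz1 n : Negz n + 1 = if n is n'.+1 then Negz n' else Posz 0.
Proof. case: n => [|n]; rewrite ?NegzE; lia. Qed.

Lemma lmulB_raiseN (T : pzRingType) (f g : int -> T) N M k :
  lbounded f N -> lmulB f g N M k = lmulB f g (N + 1) M k.
Proof.
move=> hf; rewrite !lmulBE /lmulN.
have -> : N + 1 + M - k = (N + M - k) + 1 by lia.
case: (N + M - k) => [n|n].
  rewrite -PoszD addn1 [RHS]big_ord_recl /= hf ?mul0r ?add0r; last by rewrite subr0; lia.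
  apply: eq_bigr => i _; congr (f _ * g _).
    rewrite /bump /=; lia.
rewrite negz1; case: n => [|n] //.
by rewrite big_ord1 hf ?mul0r // subr0; lia.
Qed.

Lemma lmulB_raiseM (T : pzRingType) (f g : int -> T) N M k :
  lbounded g M -> lmulB f g N M k = lmulB f g N (M + 1) k.
Proof.
move=> hg; rewrite !lmulBE /lmulN.
have -> : N + (M + 1) - k = (N + M - k) + 1 by lia.
case: (N + M - k) => [n|n].
  rewrite -PoszD addn1 [RHS]big_ord_recr /= hg ?mulr0 ?addr0; last by rewrite subnn; lia.
  apply: eq_bigr => i _; move: (ltn_ord i) => hi; congr (f _ * g _); lia.
rewrite negz1; case: n => [|n] //.
by rewrite big_ord1 hg ?mulr0 // subn0; lia.
Qed.

Lemma lbounded_le (T : zmodType) (f : int -> T) N N' :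
  lbounded f N -> N <= N' -> lbounded f N'.
Proof. move=> h le k lt; apply: h; lia. Qed.

Lemma lmulB_raiseNd (T : pzRingType) (f g : int -> T) (N : int) M k (d : nat) :
  lbounded f N -> lmulB f g N M k = lmulB f g (N + d%:Z) M k.
Proof.
move=> hf; elim: d => [|d IH]; first by rewrite addr0.
rewrite IH (lmulB_raiseN _ _ _ (lbounded_le hf _)); last by lia.
by congr lmulB; lia.
Qed.

Lemma lmulB_raiseMd (T : pzRingType) (f g : int -> T) (N : int) M k (d : nat) :
  lbounded g M -> lmulB f g N M k = lmulB f g N (M + d%:Z) k.
Proof.
move=> hg; elim: d => [|d IH]; first by rewrite addr0.
rewrite IH (lmulB_raiseM _ _ _ (lbounded_le hg _)); last by lia.
by congr lmulB; lia.
Qed.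

Lemma lmulB_indep (T : pzRingType) (f g : int -> T) (N N' M M' : nat) k :
  lbounded f N -> lbounded f N' -> lbounded g M -> lbounded g M' ->
  lmulB f g N M k = lmulB f g N' M' k.
Proof.
move=> h1 h2 h3 h4.
rewrite (lmulB_raiseNd _ _ _ (maxn N N' - N) h1) (lmulB_raiseMd _ _ _ (maxn M M' - M) h3).
rewrite (lmulB_raiseNd _ _ _ (maxn N N' - N') h2) (lmulB_raiseMd _ _ _ (maxn M M' - M') h4).
by congr lmulB; lia.
Qed.

Lemma lmulB_ext (T : pzRingType) (f f' g g' : int -> T) N M k :
  f =1 f' -> g =1 g' -> lmulB f g N M k = lmulB f' g' N M k.
Proof. by move=> e1 e2; rewrite /lmulB; case: ifP => // _; apply: eq_bigr => i _; rewrite e1 e2. Qed.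

Lemma lmulB_addl (T : pzRingType) (f f' g : int -> T) N M k :
  lmulB (fun i => f i + f' i) g N M k = lmulB f g N M k + lmulB f' g N M k.
Proof. rewrite /lmulB; case: ifP => _; last by rewrite addr0.
by rewrite -big_split; apply: eq_bigr => i _; rewrite mulrDl. Qed.

Lemma lmulB_addr (T : pzRingType) (f g g' : int -> T) N M k :
  lmulB f (fun i => g i + g' i) N M k = lmulB f g N M k + lmulB f g' N M k.
Proof. rewrite /lmulB; case: ifP => _; last by rewrite addr0.
by rewrite -big_split; apply: eq_bigr => i _; rewrite mulrDr. Qed.

Lemma lmulB_oppl (T : pzRingType) (f g : int -> T) N M k :
  lmulB (fun i => - f i) g N M k = - lmulB f g N M k.
Proof. rewrite /lmulB; case: ifP => _; last by rewrite oppr0.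
by rewrite -sumrN; apply: eq_bigr => i _; rewrite mulNr. Qed.

Lemma lmulB_oppr (T : pzRingType) (f g : int -> T) N M k :
  lmulB f (fun i => - g i) N M k = - lmulB f g N M k.
Proof. rewrite /lmulB; case: ifP => _; last by rewrite oppr0.
by rewrite -sumrN; apply: eq_bigr => i _; rewrite mulrN. Qed.

Lemma lmulB_deriv (T : pzRingType) (f g : int -> T) N M k :
  lbounded f N -> lbounded g M ->
  lmulB f g N M (k + 1) *~ (k + 1) =
  lmulB (fun i => f (i + 1) *~ (i + 1)) g N M k +
  lmulB f (fun i => g (i + 1) *~ (i + 1)) N M k.
Proof.
move=> hf hg; rewrite !lmulBE /lmulN.
have -> : N + M - (k + 1) = (N + M - k) - 1 by lia.
case E: (N + M - k) => [n|n].
  case: n E => [|n] E.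
    rewrite big_ord1 big_ord1 /= !subr0 ?subn0 hf ?mul0rz ?mul0r ?add0r; last by lia.
    rewrite hg ?mul0rz ?mul0r ?mulr0 //; last by lia.
  have -> : Posz n.+1 - 1 = Posz n by lia.
  rewrite [X in _ = X + _]big_ord_recl [X in _ = _ + X]big_ord_recr /=.
  rewrite hf ?mul0r ?mulr0z ?add0r; last by lia.
  rewrite (hg (M - (n.+1 - n.+1)%N%:Z + 1)) ?mul0rz ?mul0r ?mulr0 ?addr0 ?add0r; last by rewrite subnn; lia.
  rewrite mulrz_suml -big_split /=; apply: eq_bigr => i _.
  move: (ltn_ord i) => hi.
  rewrite mulrzAl mulrzAr /bump /= add1n.
  have -> : N - (i.+1)%:Z + 1 = N - (i : nat)%:Z by lia.
  have -> : (M - (n.+1 - i.+1)%N%:Z) = M - (n - i)%N%:Z by lia.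
  have -> : (M - (n.+1 - i)%N%:Z + 1) = M - (n - i)%N%:Z by lia.
  by rewrite -mulrzDr; congr (_ *~ _); lia.
by rewrite addr0 /= mul0rz.
Qed.

Lemma islin0 (C : pzRingType) (U V : lmodType C) (f : U -> V) : islin f -> f 0 = 0.
Proof. move=> h; have := h 1 0 0; rewrite !scale1r addr0 => H.
by have := congr1 (fun z => z - f 0) H; rewrite /= subrr addrK => ->. Qed.

Lemma islinD (C : pzRingType) (U V : lmodType C) (f : U -> V) : islin f ->
  forall u v, f (u + v) = f u + f v.
Proof. by move=> h u v; have := h 1 u v; rewrite !scale1r => ->. Qed.

Lemma islinZ (C : pzRingType) (U V : lmodType C) (f : U -> V) : islin f ->
  forall a u, f (a *: u) = a *: f u.
Proof. by move=> h a u; have := h a u 0; rewrite (islin0 h) !addr0 => ->. Qed.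

Lemma islinN (C : pzRingType) (U V : lmodType C) (f : U -> V) : islin f ->
  forall u, f (- u) = - f u.
Proof. by move=> h u; rewrite -scaleN1r islinZ // scaleN1r. Qed.

Lemma islinB (C : pzRingType) (U V : lmodType C) (f : U -> V) : islin f ->
  forall u v, f (u - v) = f u - f v.
Proof. by move=> h u v; rewrite islinD // islinN. Qed.

Lemma islin_sum (C : pzRingType) (U V : lmodType C) (f : U -> V) : islin f ->
  forall I (r : seq I) (P : pred I) F, f (\sum_(i <- r | P i) F i) = \sum_(i <- r | P i) f (F i).
Proof. by move=> h I r P F; apply: (big_morph f (islinD h) (islin0 h)). Qed.

Lemma islin_if (C : pzRingType) (U V : lmodType C) (f : U -> V) : islin f ->
  forall (b : bool) u, f (if b then u else 0) = if b then f u else 0.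
Proof. by move=> h [] u //; rewrite islin0. Qed.

Lemma tens_ext (C : pzRingType) (A T : lmodType C) (tens : A -> A -> T)
  (V : lmodType C) (g1 g2 : T -> V) :
  is_tensor tens -> islin g1 -> islin g2 ->
  (forall a b, g1 (tens a b) = g2 (tens a b)) -> forall x, g1 x = g2 x.
Proof. by case=> _ _ h; apply: h. Qed.

Lemma idc_mul (C : comPzRingType) (A T : algType C) (tens : A -> A -> T)
  (c : A -> C) (idc : T -> A) :
  is_tensor tens ->
  (forall a b a' b', tens a b * tens a' b' = tens (a * a') (b * b')) ->
  (forall x y, c (x * y) = c x * c y) ->
  islin idc -> (forall a b, idc (tens a b) = c b *: a) ->
  forall u v, idc (u * v) = idc u * idc v.
Proof.
move=> ht htm hcm hl hidc.
have step : forall a' b' u, idc (u * tens a' b') = idc u * idc (tens a' b').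
  move=> a' b'; apply: (tens_ext (g1 := fun u => idc (u * tens a' b'))
                        (g2 := fun u => idc u * idc (tens a' b')) ht).
  - by move=> a u v /=; rewrite mulrDl -scalerAl hl.
  - by move=> a u v /=; rewrite hl mulrDl -scalerAl.
  move=> a b /=; rewrite htm !hidc hcm -scalerAl -scalerAr scalerA.
  by rewrite mulrC.
move=> u; apply: (tens_ext (g1 := fun v => idc (u * v))
                     (g2 := fun v => idc u * idc v) ht).
- by move=> a v w /=; rewrite mulrDr -scalerAr hl.
- by move=> a v w /=; rewrite hl mulrDr -scalerAr.
by move=> a b /=; rewrite step.
Qed.

Lemma idD_mul (C : comPzRingType) (A T : algType C) (tens : A -> A -> T)
  (D : A -> A) (idD : T -> T) :
  is_tensor tens ->
  (forall a b a' b', tens a b * tens a' b' = tens (a * a') (b * b')) ->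
  (forall x y, D (x * y) = D x * y + x * D y) ->
  islin idD -> (forall a b, idD (tens a b) = tens a (D b)) ->
  forall u v, idD (u * v) = idD u * v + u * idD v.
Proof.
move=> ht htm hD hl hidD.
have [[bl br] _ _] := ht.
have lin2 : forall w, islin (fun u => idD u * w + u * idD w).
  move=> w a u v /=; rewrite hl !mulrDl -!scalerAl scalerDr.
  by rewrite addrACA.
have lin2' : forall u, islin (fun w => idD u * w + u * idD w).
  move=> u a v w /=; rewrite hl !mulrDr -!scalerAr scalerDr.
  by rewrite addrACA.
have step : forall a' b' u, idD (u * tens a' b') = idD u * tens a' b' + u * idD (tens a' b').
  move=> a' b'; apply: (tens_ext (g1 := fun u => idD (u * tens a' b')) ht _ (lin2 _)).
  - by move=> a u v /=; rewrite mulrDl -scalerAl hl.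
  move=> a b /=; rewrite htm !hidD !htm hD.
  by rewrite (islinD (bl _)).
move=> u; apply: (tens_ext (g1 := fun v => idD (u * v)) ht _ (lin2' _)).
- by move=> a v w /=; rewrite mulrDr -scalerAr hl.
by move=> a b /=; rewrite step.
Qed.

Lemma lmulB_map (T1 T2 : pzRingType) (phi : T1 -> T2) (f g : int -> T1) N M k :
  phi 0 = 0 -> {morph phi : x y / x + y} -> {morph phi : x y / x * y} ->
  phi (lmulB f g N M k) = lmulB (fun i => phi (f i)) (fun i => phi (g i)) N M k.
Proof.
move=> h0 hD hM; rewrite /lmulB; case: ifP => // _.
by rewrite (big_morph phi hD h0); apply: eq_bigr => i _; rewrite hM.
Qed.

Lemma lmulB_der (T : pzRingType) (phi : T -> T) (f g : int -> T) N M k :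
  phi 0 = 0 -> {morph phi : x y / x + y} ->
  (forall x y, phi (x * y) = phi x * y + x * phi y) ->
  phi (lmulB f g N M k) =
  lmulB (fun i => phi (f i)) g N M k + lmulB f (fun i => phi (g i)) N M k.
Proof.
move=> h0 hD hM; rewrite /lmulB; case: ifP => _; last by rewrite h0 addr0.
by rewrite (big_morph phi hD h0) -big_split; apply: eq_bigr => i _; rewrite hM.
Qed.

Lemma lmulB_neg (T : pzRingType) (p q : int -> T) (n m : nat) k :
  (forall i, i < 0 -> p i = 0) -> (forall i, i < 0 -> q i = 0) ->
  k < 0 -> lmulB p q n m k = 0.
Proof.
move=> hp hq hk; rewrite lmulBE /lmulN.
case E: (_ + _ - _) => [N|N] //.
apply: big1 => a _; move: (ltn_ord a) => ha.
have [h|h] : (n%:Z - (a : nat)%:Z < 0) \/ (m%:Z - (N - a)%N%:Z < 0) by lia.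
  by rewrite hp // mul0r.
by rewrite hq // mulr0.
Qed.

Lemma lmulB_0 (T : pzRingType) (p q : int -> T) (n m : nat) :
  (forall i, i < 0 -> p i = 0) -> (forall i, i < 0 -> q i = 0) ->
  lmulB p q n m 0 = p 0 * q 0.
Proof.
move=> hp hq; rewrite lmulBE /lmulN.
have -> : n%:Z + m%:Z - 0 = (n + m)%N by lia.
rewrite (eq_bigr (fun a : 'I_(n + m).+1 => if (a : nat) == n then p 0 * q 0 else 0)).
  by rewrite -big_mkcond (big_ord1_eq _ (fun _ => p 0 * q 0)) ifT //; lia.
move=> a _; move: (ltn_ord a) => ha; case: eqP => e.
  by congr (p _ * q _); lia.
have [h|h] : (n%:Z - (a : nat)%:Z < 0) \/ (m%:Z - (n + m - a)%N%:Z < 0) by lia.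
  by rewrite hp // mul0r.
by rewrite hq // mulr0.
Qed.

Lemma lmulB_1 (T : pzRingType) (p q : int -> T) (n m : nat) :
  (forall i, i < 0 -> p i = 0) -> (forall i, i < 0 -> q i = 0) ->
  (1 <= n)%N -> (1 <= m)%N ->
  lmulB p q n m 1 = p 1 * q 0 + p 0 * q 1.
Proof.
move=> hp hq hn hm; rewrite lmulBE /lmulN.
have -> : n%:Z + m%:Z - 1 = (n + m - 1)%N by lia.
rewrite (eq_bigr (fun a : 'I_(n + m - 1).+1 =>
   (if (a : nat) == n.-1 then p 1 * q 0 else 0) + (if (a : nat) == n then p 0 * q 1 else 0))).
  rewrite big_split /= -!big_mkcond (big_ord1_eq _ (fun _ => p 1 * q 0)) (big_ord1_eq _ (fun _ => p 0 * q 1)) !ifT //; lia.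
move=> a _; move: (ltn_ord a) => ha; case: eqP => e1; case: eqP => e2.
- lia.
- by rewrite addr0; congr (p _ * q _); lia.
- by rewrite add0r; congr (p _ * q _); lia.
rewrite addr0.
have [h|h] : (n%:Z - (a : nat)%:Z < 0) \/ (m%:Z - (n + m - 1 - a)%N%:Z < 0) by lia.
  by rewrite hp // mul0r.
by rewrite hq // mulr0.
Qed.

Unset Implicit Arguments. Set Strict Implicit. Set Printing Implicit Defensive.
Local Open Scope complex_scope.

Lemma ifE (X : Type) (b' b : bool) (x y : X) : b = b' -> (if b then x else y) = (if b' then x else y).
Proof. by move=> ->. Qed.

Theorem mainTheorem2 (R : realType) (e1 e2 e3 : R[i])
  (A : algType R[i]) (t : nat -> nat -> A) (c : A -> R[i])
  (T : algType R[i]) (tens : A -> A -> T) (Y : A -> int -> T)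
  (idc : T -> A) (idD : T -> T) :
  (* parameters: sigma_2, sigma_3 *)
  e1 + e2 + e3 = 0 ->
  (* the algebra A = U_{e1}(gl_1 (x) Diff_{e2}(C)) *)
  UDiff_rels (e1 ^+ 2 + e1 * e2 + e2 ^+ 2) (e1 * e2 * e3) t ->
  (forall x : A, gen_by t x) ->
  (* the augmentation c *)
  islin c -> (forall x y, c (x * y) = c x * c y) -> c 1 = 1 ->
  (forall a b, c (t a b) = 0) ->
  (* T = A (x) A as an algebra *)
  is_tensor tens ->
  (forall a b a' b', tens a b * tens a' b' = tens (a * a') (b * b')) ->
  tens 1 1 = 1 ->
  (* Y(w) : A -> (A (x) A)((w^{-1})), Y x k = coefficient of w^k *)
  laurent_alg_hom Y ->
  (forall (n : nat) (k : int),
     Y (t 0%N n) k =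
       (if k == 0 then tens 1 (t 0%N n) else 0)
       + (if (0 <= k) && (k <= n%:Z)
          then 'C(n, n - absz k)%:R *: tens (t 0%N (n - absz k)%N) 1 else 0)) ->
  (forall k : int,
     Y (t 2%N 0%N) k =
       (if k == 0 then tens 1 (t 2%N 0%N) + tens (t 2%N 0%N) 1 else 0)
       + (2%:R * (e1 * e2 * e3)) *:
           \sum_(m < (absz k).+1) \sum_(n < (absz k).+1)
             (if (m + n + 2)%N%:Z + k == 0
              then ((m + n + 1)`!%:R / ((m`!)%:R * (n`!)%:R) * (-1) ^+ n)
                     *: tens (t 0%N n) (t 0%N m)
              else 0)) ->
  (* Id (x) c *)
  islin idc -> (forall a b, idc (tens a b) = c b *: a) ->
  (* Id (x) Dstar *)
  islin idD -> (forall a b, idD (tens a b) = tens a (Dstar idc Y b)) ->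
  [/\ islin (Dstar idc Y),
      (forall x y, Dstar idc Y (x * y) = Dstar idc Y x * y + x * Dstar idc Y y),
      (forall a b : nat, Dstar idc Y (t a b) = b%:R *: t a b.-1) &
      (* d/dw Y(w) = Y(w) Dstar - (Id (x) Dstar) Y(w), coefficientwise *)
      (forall (v : A) (k : int),
         (k + 1)%:~R *: Y v (k + 1) = Y (Dstar idc Y v) k - idD (Y v k))].
Proof.
move=> he hrel hgen hcl hcm hc1 hct ht htm ht1 hY hY0n hY20 hidcl hidc hidDl hidD.
case: hY => hYb hYl hY1 hYm.
have [[bl br] _ _] := ht.
have YL : forall k, islin (fun x => Y x k) by move=> k a x y; exact: hYl.
have Y0 : forall k, Y 0 k = 0 by move=> k; exact: (islin0 (YL k)).
have YD : forall x y k, Y (x + y) k = Y x k + Y y k by move=> x y k; exact: (islinD (YL k)).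
have YZ : forall a x k, Y (a *: x) k = a *: Y x k by move=> a x k; exact: (islinZ (YL k)).
have idc1 : idc 1 = 1 by rewrite -ht1 hidc hc1 scale1r.
have idcM := idc_mul ht htm hcm hidcl hidc.
have nb : forall x, exists n : nat, (1 <= n)%N /\ lbounded (Y x) n.
  move=> x; have [N hN] := hYb x; exists (absz N).+1; split => //.
  by apply: (lbounded_le hN); lia.
have nb2 : forall x y, exists n : nat, (1 <= n)%N /\ lbounded (Y x) n /\ lbounded (Y y) n.
  move=> x y; have [n1 [h1 b1]] := nb x; have [n2 [h2 b2]] := nb y.
  exists (maxn n1 n2); split; first by lia.
  by split; [apply: (lbounded_le b1) | apply: (lbounded_le b2)]; lia.
have pt20 : forall k, idc (Y (t 2%N 0%N) k) = if k == 0 then t 2%N 0%N else 0.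
  move=> k; rewrite hY20 (islinD hidcl) (islin_if hidcl) (islinD hidcl) !hidc hct hc1.
  rewrite scale0r add0r scale1r (islinZ hidcl) (islin_sum hidcl) big1 ?scaler0 ?addr0 //.
  move=> m _; rewrite (islin_sum hidcl) big1 // => n _.
  by rewrite (islin_if hidcl) (islinZ hidcl) hidc hct scale0r scaler0 if_same.
have pt0n : forall (n : nat) k, idc (Y (t 0%N n) k) =
    if (0 <= k) && (k <= n%:Z) then 'C(n, n - absz k)%:R *: t 0%N (n - absz k)%N else 0.
  move=> n k; rewrite hY0n (islinD hidcl) !(islin_if hidcl) (islinZ hidcl) !hidc hct hc1.
  by rewrite scale0r scale1r if_same add0r.
have Q : forall x, (forall k, k < 0 -> idc (Y x k) = 0) /\ idc (Y x 0) = x.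
  move=> x; elim: (hgen x).
  - by split; [move=> k hk; rewrite pt20 ifF //; apply/eqP; lia | rewrite pt20].
  - move=> n; split; first by move=> k hk; rewrite pt0n ifF //; lia.
    by rewrite pt0n /= subn0 binn scale1r.
  - by split; [move=> k hk; rewrite hY1 ifF ?islin0 //; apply/eqP; lia | rewrite hY1 /= idc1].
  - move=> a x' _ [h1 h2]; split; last by rewrite YZ (islinZ hidcl) h2.
    by move=> k hk; rewrite YZ (islinZ hidcl) h1 ?scaler0.
  - move=> x' y' _ [h1 h2] _ [h3 h4]; split; last by rewrite YD (islinD hidcl) h2 h4.
    by move=> k hk; rewrite YD (islinD hidcl) h1 ?h3 ?addr0.
  - move=> x' y' _ [h1 h2] _ [h3 h4].
    have [n [hn [bx _]]] := nb2 x' x'; have [m [hm [by' _]]] := nb2 y' y'.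
    have E : forall k, idc (Y (x' * y') k) = lmulB (fun i => idc (Y x' i)) (fun i => idc (Y y' i)) n m k.
      move=> k; rewrite (hYm _ _ _ _ bx by') lmulB_map //; first exact: islin0.
      exact: islinD.
    split; first by move=> k hk; rewrite E lmulB_neg.
    by rewrite E lmulB_0 // h2 h4.
set D := Dstar idc Y.
have DL : islin D by move=> a x y; rewrite /D /Dstar hYl hidcl.
have DM : forall x y, D (x * y) = D x * y + x * D y.
  move=> x y; rewrite /D /Dstar.
  have [n [hn [bx _]]] := nb2 x x; have [m [hm [by' _]]] := nb2 y y.
  rewrite (hYm _ _ _ _ bx by') lmulB_map; last exact: idcM; last exact: islinD; last exact: islin0.
  by rewrite lmulB_1 // ?(Q x).2 ?(Q y).2 //; [apply: (Q x).1 | apply: (Q y).1].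
have D1 : D 1 = 0 by rewrite /D /Dstar hY1 /= islin0.
have Dt20 : D (t 2%N 0%N) = 0 by rewrite /D /Dstar pt20.
have Dt0n : forall n, D (t 0%N n) = n%:R *: t 0%N n.-1.
  move=> n; rewrite /D /Dstar pt0n; case: n => [|n] /=; first by rewrite scale0r.
  by rewrite subn1 /= binSn.
have Dt : forall a b, D (t a b) = b%:R *: t a b.-1.
  elim=> [|a IH] b; first exact: Dt0n.
  have [[_ _ _ h20] _] := hrel a b.+1.
  have e : t a.+1 b = ((2 * b.+1)%:R)^-1 *: comm (t 2%N 0%N) (t a b.+1).
    by rewrite h20 /= scalerA mulVf ?scale1r // pnatr_eq0.
  rewrite e (islinZ DL) /comm (islinB DL) !DM Dt20 IH mul0r add0r mulr0 addr0.
  rewrite -scalerAr -scalerAl -scalerBr.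
  have [[_ _ _ h20'] _] := hrel a b; rewrite /comm in h20'; rewrite h20' !scalerA.
  congr (_ *: _); rewrite !natrM; field.
  by rewrite addrC natr1 pnatr_eq0.
have idD1 : idD 1 = 0 by rewrite -ht1 hidD -/D D1 (islin0 (bl 1)).
have idDM := idD_mul ht htm DM hidDl hidD.
split => //.
move=> v; elim: (hgen v).
- move=> k; rewrite Dt20 Y0 sub0r !hY20.
  rewrite (islinD hidDl) (islin_if hidDl) (islinD hidDl) !hidD -/D Dt20 D1.
  rewrite (islin0 (bl 1)) (islin0 (bl (t 2%N 0%N))) addr0 if_same add0r.
  rewrite (islinZ hidDl) (islin_sum hidDl).
  under [in RHS]eq_bigr => m _ do rewrite (islin_sum hidDl).
  under [in RHS]eq_bigr => m _ do under eq_bigr => n _ do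
    rewrite (islin_if hidDl) (islinZ hidDl) hidD -/D Dt0n.
  case: k => [j|[|K]].
  + have -> : Posz j + 1 = Posz j.+1 by lia.
    have -> : (Posz j.+1 == 0) = false by [].
    rewrite add0r big1 ?scaler0; last by move=> m _; apply: big1 => n _; case: eqP => // ?; lia.
    rewrite big1 ?scaler0 ?oppr0 //.
    by move=> m _; apply: big1 => n _; case: eqP => // ?; lia.
  + have -> : Negz 0 + 1 = 0 by [].
    rewrite scale0r big1 ?scaler0 ?oppr0 //.
    move=> m _; apply: big1 => n _; case: eqP => // h.
    by have h2 : ((m + n + 2)%N%:Z - 1 = 0) := h; lia.
  have -> : Negz K.+1 + 1 = Negz K by rewrite !NegzE; lia.
  have -> : (Negz K == 0) = false by [].
  rewrite add0r.
  have -> : (Negz K)%:~R = - (K.+1)%:R :> R[i] by rewrite NegzE mulrNz.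
  rewrite scaleNr; congr (- _).
  rewrite !scalerA [X in X *: _]mulrC -scalerA; congr (_ *: _).
  rewrite [RHS]big_ord_recl [in RHS]big1 ?add0r; last first.
    by move=> n _; rewrite /= mulr0n scale0r (islin0 (bl _)) scaler0 if_same.
  rewrite scaler_sumr; apply: eq_bigr => i _; rewrite scaler_sumr [RHS]big_ord_recr /=.
  rewrite /bump /= add1n.
  rewrite [X in _ = _ + X](_ : _ = 0) ?addr0; last first.
    rewrite (@ifE _ false) //; apply/eqP => h.
    have h2 : ((i.+1 + K.+2 + 2)%N%:Z - (K.+2)%:Z = 0) := h; lia.
  apply: eq_bigr => n _.
  rewrite (@ifE _ (i + n + 1 == K)%N); last first.
    apply/eqP/eqP => h.
      by have h' : ((i + n + 2)%N%:Z - (K.+1)%:Z = 0) := h; lia.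
    by change ((i + n + 2)%N%:Z - (K.+1)%:Z = 0); lia.
  rewrite [in RHS](@ifE _ (i + n + 1 == K)%N); last first.
    apply/eqP/eqP => h.
      by have h' : ((i.+1 + n + 2)%N%:Z - (K.+2)%:Z = 0) := h; lia.
    by change ((i.+1 + n + 2)%N%:Z - (K.+2)%:Z = 0); lia.
  case: eqP => hK; last by rewrite scaler0.
  rewrite (islinZ (bl _)) !scalerA add0n; congr (_ *: _).
  move: (i : nat) (n : nat) hK => a b <-.
  have -> : (a.+1 + b + 1 = (a + b + 1).+1)%N by lia.
  have fa : (a`!)%:R != 0 :> R[i] by rewrite pnatr_eq0 -lt0n fact_gt0.
  have fb : (b`!)%:R != 0 :> R[i] by rewrite pnatr_eq0 -lt0n fact_gt0.
  have fa1 : (a.+1)%:R != 0 :> R[i] by rewrite pnatr_eq0.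
  rewrite !factS !natrM; field.
  by rewrite fa fb addrC natr1 pnatr_eq0.
- move=> n k.
  have sif : forall (b : bool) (a : R[i]) (X : T), (if b then a *: X else 0) = a *: (if b then X else 0).
    by move=> [] a X //; rewrite scaler0.
  rewrite Dt0n YZ !hY0n (islinD hidDl) !(islin_if hidDl) (islinZ hidDl) !hidD -/D D1 Dt0n.
  rewrite (islin0 (bl _)) scaler0 if_same addr0 (islinZ (bl 1)) (sif (k == 0)) [in RHS]scalerDr [in RHS]addrAC subrr add0r.
  case: k => [j|K].
    have -> : Posz j + 1 = Posz j.+1 by lia.
    have -> : (Posz j.+1 == 0) = false by [].
    rewrite add0r; case: n => [|n].
      by rewrite scale0r (_ : (0 <= Posz j.+1 <= Posz 0) = false) // scaler0.
    rewrite (@ifE _ (j <= n)%N) // (@ifE _ (j <= n)%N) //.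
    case: leqP => h; last by rewrite !scaler0.
    rewrite subSS !scalerA; congr (_ *: _).
    have -> : (Posz j.+1)%:~R = j.+1%:R :> R[i] by [].
    rewrite -!natrM (bin_sub h) -subSS (@bin_sub n.+1 j.+1) // mul_bin_diag.
    by rewrite mulnC.
  case: K => [|K].
    have -> : Negz 0 + 1 = 0 by [].
    rewrite scale0r; case E: (_ && _); last by rewrite scaler0.
    by move/andP: E => [].
  have -> : Negz K.+1 + 1 = Negz K by rewrite !NegzE; lia.
  case E1: (_ == _); first by [].
  case E2: (_ && _); first by move/andP: E2 => [].
  by rewrite addr0 !scaler0.
- move=> k; rewrite D1 Y0 !hY1 (islin_if hidDl) idD1 if_same sub0r oppr0.
  by case: eqP => [->|_]; rewrite ?scale0r ?scaler0.
- move=> a x _ IH k.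
  by rewrite (islinZ DL) !YZ (islinZ hidDl) -scalerBr -IH !scalerA mulrC.
- move=> x y _ IH1 _ IH2 k.
  rewrite (islinD DL) !YD (islinD hidDl) scalerDr IH1 IH2.
  by rewrite opprD addrACA.
move=> x y _ IHx _ IHy k.
have [n [_ [bx bDx]]] := nb2 x (D x); have [m [_ [by' bDy]]] := nb2 y (D y).
rewrite scaler_int (hYm _ _ _ _ bx by') lmulB_deriv //.
have ex : (fun i => Y x (i + 1) *~ (i + 1)) =1 (fun i => Y (D x) i - idD (Y x i)).
  by move=> i /=; rewrite -scaler_int IHx.
have ey : (fun i => Y y (i + 1) *~ (i + 1)) =1 (fun i => Y (D y) i - idD (Y y i)).
  by move=> i /=; rewrite -scaler_int IHy.
rewrite (lmulB_ext _ _ _ ex (frefl (Y y))) (lmulB_ext _ _ _ (frefl (Y x)) ey).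
rewrite lmulB_addl lmulB_oppl lmulB_addr lmulB_oppr.
rewrite DM YD (hYm _ _ _ _ bDx by') (hYm _ _ _ _ bx bDy) (hYm _ _ _ _ bx by').
rewrite (lmulB_der (phi := idD)); [|exact: (islin0 hidDl) | exact: (islinD hidDl) | exact: idDM].
by rewrite opprD addrACA.
Qed.
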